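(* Let $\varepsilon\in(0,\frac12)$ and $a\ge1$, and let $G$ be a graph. Assume that for every induced subgraph $F$ of $G$ with $|F|\ge\varepsilon^{2a}|G|$, there exists $k\in[2,1/\varepsilon]$ such that there is a complete or anticomplete $(k,|F|/k^a)$-blockade in $F$. Then $G$ has an $\varepsilon$-restricted induced subgraph with at least $\varepsilon^{3a}|G|$ vertices.
   Context: Graphs are finite and simple; $|G|$ is the number of vertices of $G$ and $\overline G$ its complement. $G$ is $\varepsilon$-sparse if its maximum degree is at most $\varepsilon|G|$, and $\varepsilon$-restricted if one of $G,\overline G$ is $\varepsilon$-sparse. A blockade in $G$ is a sequence $(B_1,\ldots,B_m)$ of disjoint subsets of $V(G)$, with length $m$ and width $\min_i|B_i|$; a $(k,w)$-blockade has length at least $k$ and width at least $w$. A blockade is complete (resp. anticomplete) if between any two distinct blocks all (resp. no) edges are present. *)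

(* Defs.v *)
From HB Require Import structures.
From mathcomp Require Import all_boot all_order all_algebra.
From mathcomp Require Import reals exp.
Set Implicit Arguments. Unset Strict Implicit. Unset Printing Implicit Defensive.
Import Order.TTheory GRing.Theory Num.Theory.
Local Open Scope ring_scope.

(* A simple graph on a finite vertex type T: a symmetric irreflexive relation e.
   Induced subgraphs are given by their vertex sets S : {set T}. *)

Definition compl_rel (T : finType) (e : rel T) : rel T :=
  fun x y => (x != y) && ~~ e x y.

Definition sparse_on (R : realType) (T : finType) (e : rel T) (eps : R)
    (S : {set T}) : Prop :=
  forall v, v \in S -> (#|[set u in S | e v u]|%:R <= eps * #|S|%:R)%R.

Definition restricted_on (R : realType) (T : finType) (e : rel T) (eps : R)
    (S : {set T}) : Prop :=
  sparse_on e eps S \/ sparse_on (compl_rel e) eps S.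

Definition blockade_in (T : finType) (S : {set T}) (B : seq {set T}) : Prop :=
  (forall i, (i < size B)%N -> nth set0 B i \subset S) /\
  (forall i j, (i < size B)%N -> (j < size B)%N -> i != j ->
     [disjoint nth set0 B i & nth set0 B j]).

Definition kw_blockade (R : realType) (T : finType) (S : {set T})
    (B : seq {set T}) (k : nat) (w : R) : Prop :=
  blockade_in S B /\ (k <= size B)%N /\
  (forall i, (i < size B)%N -> w <= #|nth set0 B i|%:R).

Definition complete_blockade (T : finType) (e : rel T) (B : seq {set T}) : Prop :=
  forall i j, (i < size B)%N -> (j < size B)%N -> i != j ->
    forall x y, x \in nth set0 B i -> y \in nth set0 B j -> e x y.

Definition anticomplete_blockade (T : finType) (e : rel T) (B : seq {set T}) : Prop :=
  forall i j, (i < size B)%N -> (j < size B)%N -> i != j ->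
    forall x y, x \in nth set0 B i -> y \in nth set0 B j -> ~~ e x y.

(* Main.v *)
Require Import Defs.
From HB Require Import structures.
From mathcomp Require Import all_boot all_order all_algebra.
From mathcomp Require Import reals exp.
From mathcomp Require Import zify lra.
Import Order.TTheory GRing.Theory Num.Theory.
Set Implicit Arguments. Unset Strict Implicit. Unset Printing Implicit Defensive.
From mathcomp Require Import boolp.
Lemma sub_card (T : finType) (A : {set T}) n :
  (n <= #|A|)%N -> exists B : {set T}, B \subset A /\ #|B| = n.
Proof.
move Hm: (#|A| - n)%N => m; elim: m A Hm => [|m IH] A Hm Hn.
  by exists A; split => //; lia.
have : (0 < #|A|)%N by lia.
case/card_gt0P => x xA.
have HA : #|A :\ x| = #|A|.-1 by rewrite (cardsD1 x A) xA.
have [||B [BA BC]] := IH (A :\ x); rewrite ?HA; try lia.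
by exists B; split => //; apply: subset_trans BA (subsetDl _ _).
Qed.
Lemma card_bigcup_disj (U : finType) k (P : nat -> {set U}) :
  (forall i j, (i < k)%N -> (j < k)%N -> i != j -> forall x, x \in P i -> x \in P j -> False) ->
  \sum_(j < k) #|P j| = #|\bigcup_(j < k) P j|.
Proof.
elim: k => [|k IH] H; first by rewrite !big_ord0 cards0.
rewrite !big_ord_recr /= IH; last by move=> i j ik jk; apply: H; lia.
rewrite cardsU; suff -> : (\bigcup_(i < k) P i) :&: P k = set0 by rewrite cards0 subn0.
apply/setP => x; rewrite !inE; apply/negP => /andP [/bigcupP [i _ xi] xk].
apply: (H i k _ _ _ x xi xk).
- by apply: leq_trans (ltn_ord i) _.
- by [].
- by rewrite neq_ltn ltn_ord.
Qed.

Definition cross (T : finType) (Q : rel T) (P : {set {set T}}) :=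
  forall X Y, X \in P -> Y \in P -> X != Y ->
    (forall x, x \in X -> x \in Y -> False) /\ (forall x y, x \in X -> y \in Y -> Q x y).
Definition sized (T : finType) (F : {set T}) s (P : {set {set T}}) :=
  forall X, X \in P -> X \subset F /\ #|X| = s.

Lemma combine (T : finType) (k s : nat) (b : nat -> {set T}) (F : {set T}) (Q Q' : rel T)
  (P P' : nat -> {set {set T}}) (N : nat -> nat) :
  (0 < s)%N -> (0 < k)%N ->
  (forall j, (j < k)%N -> b j \subset F) ->
  (forall i j, (i < k)%N -> (j < k)%N -> i != j ->
     (forall x, x \in b i -> x \in b j -> False) /\ (forall x y, x \in b i -> y \in b j -> Q x y)) ->
  (forall j, (j < k)%N -> [/\ sized (b j) s (P j), sized (b j) s (P' j), cross Q (P j),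
       cross Q' (P' j) & (N j <= #|P j| * #|P' j|)%N]) ->
  exists PP PP', [/\ sized F s PP, sized F s PP', cross Q PP, cross Q' PP' &
     (\sum_(j < k) N j <= #|PP| * #|PP'|)%N].
Proof.
move=> s0 k0 bF bQ HP.
pose j0 := Ordinal k0.
pose js := [arg max_(j > j0) #|P' j|].
have jsk : (js < k)%N by [].
have memP : forall j X, X \in P j -> (j < k)%N -> X \subset b j /\ #|X| = s.
  by move=> j X XP jk; have [h _ _ _ _] := HP j jk; exact: h.
have ne : forall X : {set T}, #|X| = s -> exists x, x \in X.
  by move=> X XS; apply/card_gt0P; rewrite XS.
exists (\bigcup_(j < k) P j), (P' js); split.
- move=> X /bigcupP [j _ XP]; have [XB ->] := memP j X XP (ltn_ord j).
  by split => //; apply: subset_trans XB (bF j (ltn_ord j)).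
- by have [_ h _ _ _] := HP js jsk => X XP; have [XB ->] := h X XP; split => //;
     apply: subset_trans XB (bF js jsk).
- move=> X Y /bigcupP [i _ XP] /bigcupP [j _ YP] XY.
  have [XB XS] := memP i X XP (ltn_ord i); have [YB YS] := memP j Y YP (ltn_ord j).
  case: (eqVneq (val i) (val j)) => [ij | ij].
    move/val_inj: ij => ij; subst j.
    by have [_ _ h _ _] := HP i (ltn_ord i); apply: h.
  have [h1 h2] := bQ i j (ltn_ord i) (ltn_ord j) ij.
  split; first by move=> x xX xY; apply: (h1 x); [exact: (subsetP XB) | exact: (subsetP YB)].
  by move=> x y xX yY; apply: h2; [exact: (subsetP XB) | exact: (subsetP YB)].
- by have [_ _ _ h _] := HP js jsk.
rewrite -(card_bigcup_disj (P := fun j => P j)); last first.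
  move=> i j ik jk ij X Xi Xj.
  have [XB XS] := memP i X Xi ik; have [XB' _] := memP j X Xj jk.
  have [x xX] := ne X XS; have [h1 _] := bQ i j ik jk ij.
  by apply: (h1 x); [exact: (subsetP XB) | exact: (subsetP XB')].
rewrite big_distrl /=; apply: leq_sum => j _.
have [_ _ _ _ h] := HP j (ltn_ord j); apply: leq_trans h _; rewrite leq_mul2l; apply/orP; right.
by rewrite /js; case: arg_maxnP => // i _ /(_ j isT).
Qed.
Local Open Scope ring_scope.
Lemma bound_step (R : realType) (a th : R) (k : nat) (N : nat -> nat) (bs : nat -> nat) (f : nat) :
  0 < a -> 0 < th -> (0 < k)%N ->
  (forall j, (j < k)%N -> (0 < N j)%N) ->
  (forall j, (j < k)%N -> (bs j)%:R <= th * (N j)%:R `^ a) ->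
  (forall j, (j < k)%N -> f%:R / k%:R `^ a <= (bs j)%:R) ->
  (0 < \sum_(j < k) N j)%N /\ f%:R <= th * (\sum_(j < k) N j)%:R `^ a.
Proof.
move=> a0 th0 k0 Npos Hb Hf.
have ex : exists n, [exists j : 'I_k, N j == n].
  by exists (N 0%N); apply/existsP; exists (Ordinal k0).
case: (ex_minnP ex) => n /existsP [j0 /eqP Hj0] Hmin.
have Hs : (k * n <= \sum_(j < k) N j)%N.
  have -> : (k * n = \sum_(j < k) n)%N by rewrite sum_nat_const card_ord.
  apply: leq_sum => j _; apply: Hmin; apply/existsP; exists j; by [].
split; first by apply: leq_trans Hs; rewrite muln_gt0 k0 -Hj0 Npos.
have kpos : 0 < k%:R `^ a :> R by apply: powR_gt0; rewrite ltr0n.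
have h1 := Hf _ (ltn_ord j0); have h2 := Hb _ (ltn_ord j0); rewrite Hj0 in h2.
have h3 : (k * n)%:R `^ a <= (\sum_(j < k) N j)%:R `^ a :> R.
  by apply: ge0_ler_powR; rewrite ?nnegrE ?ler0n ?ler_nat // ltW.
rewrite natrM powRM ?ler0n // in h3.
have h4 : f%:R <= k%:R `^ a * (bs j0)%:R :> R.
  by rewrite -ler_pdivrMl // mulrC.
apply: (le_trans h4); apply: le_trans (ler_wpM2l (ltW th0) h3).
rewrite mulrCA; apply: ler_wpM2l; [exact: ltW | exact: h2].
Qed.
Lemma final_step (R0 : realType) (eps : R0) (T : finType) (Q Rr : rel T) (s : nat)
   (P : {set {set T}}) :
  0 < eps -> (forall x y, Q x y -> ~~ Rr x y) -> sized setT s P -> cross Q P ->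
  1 <= eps * #|P|%:R ->
  #|cover P| = (#|P| * s)%N /\ sparse_on Rr eps (cover P).
Proof.
move=> e0 QR Hs Hc Hp.
have tr : trivIset P.
  apply/trivIsetP => X Y XP YP XY; rewrite -setI_eq0; apply/eqP/setP => x.
  rewrite !inE; apply/negP => /andP [xX xY].
  by have [h _] := Hc X Y XP YP XY; exact: (h x xX xY).
have card : #|cover P| = (#|P| * s)%N.
  rewrite -(eqP tr) -sum_nat_const; apply: eq_bigr => X XP.
  by have [_ ->] := Hs X XP.
split => // v /bigcupP [X XP vX].
have sub : [set u in cover P | Rr v u] \subset X.
  apply/subsetP => u; rewrite inE => /andP [/bigcupP [Y YP uY] Rvu].
  case: (eqVneq Y X) => [<- // | YX].
  rewrite eq_sym in YX; have [_ h] := Hc X Y XP YP YX.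
  by move: (QR _ _ (h v u vX uY)); rewrite Rvu.
apply: le_trans (_ : #|X|%:R <= _).
  by rewrite ler_nat; exact: subset_leq_card.
have [_ ->] := Hs X XP; rewrite card natrM mulrA.
by rewrite -[X in X <= _]mul1r; apply: ler_wpM2r; rewrite ?ler0n.
Qed.

Unset Implicit Arguments.
Set Strict Implicit.
Set Printing Implicit Defensive.

Theorem theorem7p4 (R : realType) (eps a : R) (T : finType) (e : rel T) :
  symmetric e -> irreflexive e ->
  0 < eps -> eps < 2^-1 -> 1 <= a ->
  (forall F : {set T}, eps `^ (2 * a) * #|T|%:R <= #|F|%:R ->
     exists k : nat, [/\ (2 <= k)%N, k%:R <= eps^-1 &
       exists B : seq {set T},
         kw_blockade F B k (#|F|%:R / (k%:R `^ a)) /\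
         (complete_blockade e B \/ anticomplete_blockade e B)]) ->
  exists S : {set T},
    eps `^ (3 * a) * #|T|%:R <= #|S|%:R /\ restricted_on e eps S.
Proof.
move=> esym eirr e0 e2 a1 H.
have a0 : 0 < a by apply: lt_le_trans a1.
have eps1 : eps <= 1 by lra.
case: (posnP #|T|) => [T0 | Tpos].
  exists set0; split; first by rewrite T0 cards0 mulr0.
  by left => v; rewrite inE.
set th := eps `^ (2 * a) * #|T|%:R.
set m0 := eps `^ (3 * a) * #|T|%:R.
have Tpos' : 0 < #|T|%:R :> R by rewrite ltr0n.
have th0 : 0 < th by rewrite mulr_gt0 // powR_gt0.
have m00 : 0 < m0 by rewrite mulr_gt0 // powR_gt0.
have m0T : m0 <= #|T|%:R.
  rewrite /m0 -[X in _ <= X]mul1r ler_pM2r //.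
  apply: (le_trans _ eps1); apply: ge1r_powR; [by rewrite e0 eps1 | lra].
have m0th : m0 = eps `^ a * th.
  rewrite /m0 /th mulrA -powRD; last by apply/implyP => _; rewrite gt_eqF.
  by congr (_ `^ _ * _); lra.
have exs : exists n, m0 <= n%:R by exists #|T|.
case: (ex_minnP exs) => s Hs Hmin.
have s0 : (0 < s)%N.
  rewrite lt0n; apply/negP => /eqP s0; move: Hs; rewrite s0 => h.
  by have := lt_le_trans m00 h; rewrite ltxx.
have big_blk : forall (F B : {set T}) (k : nat), (0 < k)%N -> th <= #|F|%:R ->
    k%:R <= eps^-1 -> #|F|%:R / k%:R `^ a <= #|B|%:R -> (s <= #|B|)%N.
  move=> F B k k0 hF hk hB; apply: Hmin; apply: le_trans hB; rewrite m0th.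
  have kpos : 0 < k%:R `^ a :> R by apply: powR_gt0; rewrite ltr0n.
  rewrite ler_pdivlMr // -mulrA mulrC -mulrA.
  have ek : eps * k%:R <= 1.
    apply: (le_trans (ler_wpM2l (ltW e0) hk)).
    by rewrite mulfV // (negbT (gt_eqF e0)).
  have h : (eps * k%:R) `^ a <= 1.
    have e1 : (1 : R) = 1 `^ a by rewrite powR1.
    rewrite [X in _ <= X]e1.
    apply: ge0_ler_powR; first exact: ltW.
    - by rewrite nnegrE mulr_ge0 ?ler0n ?ltW.
    - by rewrite nnegrE.
    - exact: ek.
  rewrite powRM in h; [|exact: ltW|exact: ler0n].
  rewrite mulrC in h.
  apply: le_trans hF; rewrite -[X in _ <= X]mulr1; apply: ler_wpM2l; [exact: ltW | exact: h].
have claim : forall n (F : {set T}), (#|F| <= n)%N -> (s <= #|F|)%N ->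
    exists P1 P2 : {set {set T}}, exists N : nat,
      [/\ sized F s P1, sized F s P2, cross [rel x y | ~~ e x y] P1, cross e P2 &
          [/\ (0 < N)%N, (N <= #|P1| * #|P2|)%N & #|F|%:R <= th * N%:R `^ a]].
  elim=> [|n IH] F Fn sF; first by exfalso; clear -Fn sF s0; lia.
  case: (boolP (th <= #|F|%:R)) => hth; last first.
    have [X [XF Xs]] := sub_card sF.
    exists [set X], [set X], 1%N; split => //; last split => //.
    - by move=> Y; rewrite inE => /eqP ->.
    - by move=> Y; rewrite inE => /eqP ->.
    - by move=> Y Z; rewrite !inE => /eqP -> /eqP ->; rewrite eqxx.
    - by move=> Y Z; rewrite !inE => /eqP -> /eqP ->; rewrite eqxx.
    - by rewrite cards1.
    - by rewrite powR1 mulr1 ltW // ltNge.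
  have [k [k2 keps [B [[[Bsub Bdis] [kB wB]] ctype]]]] := H F hth.
  have k0 : (0 < k)%N by apply: leq_trans k2.
  pose b j := nth set0 B j.
  have bF : forall j, (j < k)%N -> b j \subset F := fun j jk => Bsub j (leq_trans jk kB).
  have bs : forall j, (j < k)%N -> (s <= #|b j|)%N :=
    fun j jk => big_blk F (b j) k k0 hth keps (wB j (leq_trans jk kB)).
  have bdis : forall i j, (i < k)%N -> (j < k)%N -> i != j ->
      forall x, x \in b i -> x \in b j -> False.
    move=> i j ik jk ij x xi xj.
    have := Bdis i j (leq_trans ik kB) (leq_trans jk kB) ij.
    by move/disjointFr => h; rewrite (h x xi) in xj.
  have bsmall : forall j, (j < k)%N -> (#|b j| <= n)%N.
    move=> j jk; pose o := if j == 0%N then 1%N else 0%N.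
    have [ok oj] : (o < k)%N /\ j != o.
      by rewrite /o; case: (eqVneq j 0%N) => [->|jn]; split => //; clear -k2 jk jn; lia.
    have I0 : b j :&: b o = set0.
      by apply: disjoint_setI0; exact: Bdis (leq_trans jk kB) (leq_trans ok kB) oj.
    have : (#|b j| + #|b o| <= #|F|)%N.
      have := cardsUI (b j) (b o); rewrite I0 cards0 addn0 => <-.
      by apply: subset_leq_card; rewrite subUset !bF.
    move=> h1; have h2 := bs o ok; clear -h1 h2 Fn s0; lia.
  have IH' : forall j, exists t : {set {set T}} * {set {set T}} * nat, (j < k)%N ->
      [/\ sized (b j) s t.1.1, sized (b j) s t.1.2, cross [rel x y | ~~ e x y] t.1.1,
          cross e t.1.2 & [/\ (0 < t.2)%N, (t.2 <= #|t.1.1| * #|t.1.2|)%N &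
          #|b j|%:R <= th * t.2%:R `^ a]].
    move=> j; case: (ltnP j k) => jk; last first.
      by exists (set0, set0, 0%N).
    have [P1 [P2 [N HN]]] := IH (b j) (bsmall j jk) (bs j jk).
    by exists (P1, P2, N).
  have [f Hf] := choice IH'.
  have [Npos Nbound] : (0 < \sum_(j < k) (f j).2)%N /\
      #|F|%:R <= th * (\sum_(j < k) (f j).2)%:R `^ a.
    apply: (@bound_step R a th k (fun j => (f j).2) (fun j => #|b j|) #|F|) => //.
    - by move=> j jk; case: (Hf j jk) => _ _ _ _ [].
    - by move=> j jk; case: (Hf j jk) => _ _ _ _ [].
    - by move=> j jk; exact: wB (leq_trans jk kB).
  case: ctype => ct.
  + have [PP [PP' [h1 h2 h3 h4 h5]]] := @combine T k s b F e [rel x y | ~~ e x y]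
        (fun j => (f j).1.2) (fun j => (f j).1.1) (fun j => (f j).2) s0 k0 bF
        (fun i j ik jk ij => conj (bdis i j ik jk ij)
            (ct i j (leq_trans ik kB) (leq_trans jk kB) ij))
        (fun j jk => let: And5 x1 x2 x3 x4 (And3 _ x6 _) := Hf j jk in
                     And5 x2 x1 x4 x3 (leq_trans x6 (eq_leq (mulnC _ _)))).
    by exists PP', PP, (\sum_(j < k) (f j).2); split => //; split => //; rewrite mulnC.
  + have [PP [PP' [h1 h2 h3 h4 h5]]] := @combine T k s b F [rel x y | ~~ e x y] e
        (fun j => (f j).1.1) (fun j => (f j).1.2) (fun j => (f j).2) s0 k0 bF
        (fun i j ik jk ij => conj (bdis i j ik jk ij)
            (ct i j (leq_trans ik kB) (leq_trans jk kB) ij))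
        (fun j jk => let: And5 x1 x2 x3 x4 (And3 _ x6 _) := Hf j jk in And5 x1 x2 x3 x4 x6).
    by exists PP, PP', (\sum_(j < k) (f j).2); split.
have sT : (s <= #|[set: T]|)%N by rewrite cardsT; apply: Hmin.
have hTT : (#|[set: T]| <= #|T|)%N by rewrite cardsT.
have [P1 [P2 [N [h1 h2 h3 h4 [h5 h6 h7]]]]] := claim #|T| setT hTT sT.
rewrite cardsT /th in h7.
have h8 : 1 <= eps `^ (2 * a) * N%:R `^ a.
  by rewrite -(ler_pM2r Tpos') mul1r mulrAC.
rewrite powRrM powR_mulrn in h8; last exact: ltW.
rewrite -powRM in h8; [|by rewrite exprn_ge0 // ltW|exact: ler0n].
have h9 : 1 <= eps ^+ 2 * N%:R.
  rewrite leNgt; apply/negP => lt.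
  have nn : eps ^+ 2 * N%:R \is Num.nneg by rewrite nnegrE mulr_ge0 ?ler0n ?exprn_ge0 ?ltW.
  have n1 : (1 : R) \is Num.nneg by rewrite nnegrE.
  have := gt0_ltr_powR a0 nn n1 lt; rewrite powR1 => h.
  by have := lt_le_trans h h8; rewrite ltxx.
have hN : N%:R <= #|P1|%:R * #|P2|%:R :> R by rewrite -natrM ler_nat.
have sizeOK : forall p : nat, 1 <= eps * p%:R -> m0 <= (p * s)%N%:R.
  move=> p hp; apply: le_trans Hs _; rewrite ler_nat leq_pmull // lt0n.
  by apply/negP => /eqP p0; move: hp; rewrite p0 mulr0 ler10.
have : 1 <= eps * #|P1|%:R \/ 1 <= eps * #|P2|%:R.
  case: (lerP 1 (eps * #|P1|%:R)) => c1; first by left.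
  case: (lerP 1 (eps * #|P2|%:R)) => c2; first by right.
  exfalso.
  have p1 : 0 <= #|P1|%:R :> R by rewrite ler0n.
  have p2 : 0 <= #|P2|%:R :> R by rewrite ler0n.
  have : eps ^+ 2 * N%:R <= (eps * #|P1|%:R) * (eps * #|P2|%:R).
    rewrite mulrACA -expr2; apply: ler_wpM2l => //; exact: exprn_ge0 (ltW e0).
  have : (eps * #|P1|%:R) * (eps * #|P2|%:R) < 1.
    have q1 : 0 <= eps * #|P2|%:R by rewrite mulr_ge0 // ltW.
    apply: (le_lt_trans _ c2); rewrite -[X in _ <= X]mul1r.
    by apply: ler_wpM2r => //; exact: ltW.
  move=> h10 h11; have := le_lt_trans h9 (le_lt_trans h11 h10); by rewrite ltxx.
case => hP.
- have [c sp] := @final_step R eps T [rel x y | ~~ e x y] e s P1 e0 (fun x y h => h) h1 h3 hP.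
  by exists (cover P1); split; [rewrite c; exact: sizeOK | left].
- have [c sp] := @final_step R eps T e (compl_rel e) s P2 e0
      (fun x y h => introN idP (fun H' => negP (elimT andP H').2 h)) h2 h4 hP.
  by exists (cover P2); split; [rewrite c; exact: sizeOK | right].
Qed.
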